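(* Let $m\ge 2$ be an even integer and $k$ an integer with $\gcd(k,m)=1$. Let $\alpha\in\mathbb{F}_{2^m}$ be nonzero and not a cube in $\mathbb{F}_{2^m}$, and let $i$ be an even nonnegative integer. Then the function $f:\mathbb{F}_{2^m}^2\to\mathbb{F}_{2^m}^2$ (identified additively with $\mathbb{F}_{2^{2m}}$) given by $$f(x,y)=\big(x^{2^k+1}+\alpha\, y^{(2^k+1)2^i},\ xy\big)$$ is APN.
   Context: A function $f$ on $\mathbb{F}_{2^{2m}}$ is almost perfect nonlinear (APN) if for every $a\neq 0$ and every $b$ the equation $f(x+a)-f(x)=b$ has at most two solutions. *)

(* Defs.v *)
From HB Require Import structures.
From mathcomp Require Import all_boot all_order all_algebra.
Set Implicit Arguments. Unset Strict Implicit. Unset Printing Implicit Defensive.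
Import GRing.Theory.
Local Open Scope ring_scope.

Definition APN2 (F : finFieldType) (g : F * F -> F * F) : Prop :=
  forall a b : F * F, a != 0 ->
    (#|[set x : F * F | (g (x + a) - g x == b)%R]| <= 2)%N.

Definition is_cube (F : fieldType) (alpha : F) : Prop :=
  exists z : F, z ^+ 3 = alpha.

Definition fcor4 (F : finFieldType) (k i : nat) (alpha : F) (p : F * F) : F * F :=
  (p.1 ^+ (2 ^ k + 1) + alpha * p.2 ^+ ((2 ^ k + 1) * 2 ^ i), p.1 * p.2).

(* Main.v *)
Require Import Defs.
From HB Require Import structures.
From mathcomp Require Import all_boot all_order all_algebra.
From mathcomp Require Import all_field zify ring.
Import GRing.Theory.
Local Open Scope ring_scope.

Section Aux.
Variable F : fieldType.
Hypothesis ch2 : 2 \in [pchar F].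

Lemma frD n (x y : F) : (x + y) ^+ (2 ^ n) = x ^+ (2 ^ n) + y ^+ (2 ^ n).
Proof.
elim: n => [|n IH]; first by rewrite expn0 !expr1.
rewrite expnSr !exprM IH sqrrD.
suff -> : x ^+ (2 ^ n) * y ^+ (2 ^ n) *+ 2 = 0 by rewrite addr0.
by rewrite mulr2n (addrr_pchar2 ch2).
Qed.

Lemma sum4 (e1 e2 e3 e4 : F) : e1 - e2 = e3 - e4 -> e1 + e2 + e3 + e4 = 0.
Proof.
rewrite !(oppr_pchar2 ch2) => H.
by rewrite H -addrA (addrr_pchar2 ch2).
Qed.

Lemma Q4 k (x z a : F) :
  (x + z + a) ^+ (2 ^ k + 1) + (x + z) ^+ (2 ^ k + 1) + (x + a) ^+ (2 ^ k + 1)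
  + x ^+ (2 ^ k + 1) = z ^+ (2^k) * a + z * a ^+ (2^k).
Proof.
rewrite !exprD !expr1 !frD.
move: (x ^+ (2^k)) (z ^+ (2^k)) (a ^+ (2^k)) => X Z A.
rewrite -[RHS]addr0 -(addrr_pchar2 ch2
  (X*x + X*x + X*z + X*a + Z*x + Z*z + A*x + A*a)).
ring.
Qed.

Lemma P4 (x z a y w b : F) :
  (x + z + a) * (y + w + b) + (x + z) * (y + w) + (x + a) * (y + b) + x * y
  = z * b + a * w.
Proof.
rewrite -[RHS]addr0 -(addrr_pchar2 ch2
  (x*y + x*y + x*w + x*b + z*y + z*w + a*y + a*b)).
ring.
Qed.

Lemma cube_of (e : nat) (x : F) : (3 %| e)%N -> exists c, x ^+ e = c ^+ 3.
Proof. move/dvdnP=> [c ->]. exists (x ^+ c). by rewrite exprM. Qed.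

Lemma kernel k i (al a b z w : F) :
  (3 %| 2 ^ k + 1)%N -> (3 %| 2 ^ i - 1)%N -> ~ is_cube al ->
  (forall t : F, t ^+ (2 ^ k) = t -> t = 0 \/ t = 1) ->
  (a != 0) || (b != 0) ->
  z * b + a * w = 0 ->
  z ^+ (2 ^ k) * a + z * a ^+ (2 ^ k)
    + al * (w ^+ (2 ^ k) * b + w * b ^+ (2 ^ k)) ^+ (2 ^ i) = 0 ->
  (z = 0 /\ w = 0) \/ (z = a /\ w = b).
Proof.
move=> d1 d2 ncube fix01 nz E2 E1.
have fixu : forall t : F, t ^+ (2^k) + t = 0 -> t = 0 \/ t = 1.
  by move=> t /eqP; rewrite addr_eq0 (oppr_pchar2 ch2) => /eqP; exact: fix01.
have e2pos : (0 < 2 ^ i)%N by rewrite expn_gt0.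
have [b0|bn0] := eqVneq b 0.
  move: nz; rewrite b0 eqxx orbF => an0.
  have w0 : w = 0.
    by move: E2; rewrite b0 mulr0 add0r => /eqP; rewrite mulf_eq0 (negbTE an0) => /eqP.
  have P0 : (0:F) ^+ (2 ^ i) = 0 by rewrite expr0n eqn0Ngt e2pos.
  move: E1; rewrite w0 b0 mulr0 mul0r addr0 P0 mulr0 addr0 => E1.
  have [t zt] : exists t, z = t * a by exists (z / a); rewrite divfK.
  rewrite zt exprMn in E1.
  have H : (a ^+ (2^k) * a) * (t ^+ (2^k) + t) = 0 by rewrite -[RHS]E1; ring.
  move/eqP: H; rewrite mulf_eq0 (negbTE (mulf_neq0 (expf_neq0 _ an0) an0)) /=.
  move/eqP/fixu => [t0|t1].
    by left; rewrite zt t0 mul0r.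
  by right; rewrite zt t1 mul1r.
have [t wt] : exists t, w = t * b by exists (w / b); rewrite divfK.
rewrite wt in E2.
have zt : z = a * t.
  have : (z + a * t) * b = 0 by rewrite -[RHS]E2; ring.
  move/eqP; rewrite mulf_eq0 (negbTE bn0) orbF addr_eq0 (oppr_pchar2 ch2).
  by move/eqP.
rewrite zt wt !exprMn in E1.
set u := t ^+ (2^k) + t.
have inner : t ^+ (2^k) * b ^+ (2^k) * b + t * b * b ^+ (2^k) = b ^+ (2^k) * b * u.
  by rewrite /u; ring.
rewrite inner in E1.
have E1' : a ^+ (2^k) * a * u + al * (b ^+ (2^k) * b * u) ^+ (2 ^ i) = 0.
  by rewrite -[RHS]E1 /u; ring.
have [u0|un0] := eqVneq u 0.
  have [t0|t1] := fixu t u0.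
    by left; rewrite zt wt t0 mulr0 mul0r.
  by right; rewrite zt wt t1 mulr1 mul1r.
exfalso.
have aq : a ^+ (2^k) * a = a ^+ (2^k + 1) by rewrite exprD expr1.
have bq : b ^+ (2^k) * b = b ^+ (2^k + 1) by rewrite exprD expr1.
have ui : u ^+ (2 ^ i) = u * u ^+ (2 ^ i - 1).
  by rewrite -exprS subn1 (prednK e2pos).
rewrite exprMn aq bq ui -exprM in E1'.
have [A HA] := cube_of _ a d1.
have [B HB] := cube_of _ b (dvdn_mulr (2 ^ i) d1).
have [C HC] := cube_of _ u d2.
rewrite HA HB HC in E1'.
have Bn0 : B != 0.
  apply: contraTneq isT => B0.
  by move: HB; rewrite B0 expr0n /= => /eqP; rewrite expf_eq0 (negbTE bn0) andbF.
have Cn0 : C != 0.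
  apply: contraTneq isT => C0.
  by move: HC; rewrite C0 expr0n /= => /eqP; rewrite expf_eq0 (negbTE un0) andbF.
have H : u * (A ^+ 3 + al * (B * C) ^+ 3) = 0 by rewrite -[RHS]E1'; ring.
move/eqP: H; rewrite mulf_eq0 (negbTE un0) /= addr_eq0 => /eqP H.
apply: ncube; exists (- A / (B * C)).
have D0 : (B * C) ^+ 3 != 0 by rewrite expf_neq0 // mulf_neq0.
apply: (mulIf D0).
rewrite -exprMn divfK ?mulf_neq0 //.
have -> : (- A) ^+ 3 = - (A ^+ 3) by ring.
by rewrite H opprK.
Qed.

End Aux.

Lemma fix_pow (R : pzRingType) (t : R) N j : t ^+ N = t -> t ^+ (N ^ j) = t.
Proof.
move=> H; elim: j => [|j IH]; first by rewrite expn0 expr1.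
by rewrite expnSr exprM IH H.
Qed.

Lemma fixed01 (F : finFieldType) m k (t : F) : #|F| = (2 ^ m)%N -> coprime k m ->
  (0 < k)%N -> t ^+ (2 ^ k) = t -> t = 0 \/ t = 1.
Proof.
move=> cardF cop kpos Ht.
have [a _ /dvdnP [c Hc]] := Bezoutl m kpos.
rewrite (eqP cop) in Hc.
have t2 : (t ^+ 2) ^+ (2 ^ m) = t ^+ 2 by rewrite -cardF expf_card.
have H1 : t ^+ (2 ^ (c * k)) = t by rewrite (mulnC c k) expnM fix_pow.
have H2 : t ^+ (2 ^ (1 + a * m)) = t ^+ 2.
  by rewrite expnD expn1 exprM (mulnC a m) expnM fix_pow.
have H : t ^+ 2 = t by rewrite -H2 Hc H1.
have : t * (t - 1) = 0 by rewrite mulrBr mulr1 -expr2 H subrr.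
move/eqP; rewrite mulf_eq0 subr_eq0 => /orP [/eqP|/eqP]; auto.
Qed.

Lemma pow4 j : exists e, ((2 ^ 2) ^ j = 3 * e + 1)%N.
Proof.
elim: j => [|j [e He]]; first by exists 0%N.
exists (4 * e + 1)%N; rewrite expnS He /=; lia.
Qed.

Theorem corollary4 (F : finFieldType) (m k i : nat) (alpha : F) :
  #|F| = (2 ^ m)%N -> (2 <= m)%N -> ~~ odd m -> coprime k m ->
  alpha != 0 -> ~ is_cube alpha -> ~~ odd i ->
  APN2 (fcor4 k i alpha).
Proof.
move=> cardF m2 mev cop al0 ncube iev.
have ch2 : 2 \in [pchar F] by apply: (card_finPcharP cardF).
have kpos : (0 < k)%N.
  move: cop; case: k => //; rewrite /coprime gcd0n => /eqP m1.
  by rewrite m1 in m2.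
have kodd : odd k.
  apply: contraT => kev.
  have : (2 %| gcdn k m)%N by rewrite dvdn_gcd !dvdn2 kev mev.
  by rewrite (eqP cop).
have d1 : (3 %| 2 ^ k + 1)%N.
  rewrite -(odd_double_half k) kodd -muln2 (mulnC _ 2) expnD expnM.
  have [e ->] := pow4 k./2.
  apply/dvdnP; exists (2 * e + 1)%N; rewrite expn1; lia.
have d2 : (3 %| 2 ^ i - 1)%N.
  rewrite -(odd_double_half i) (negbTE iev) add0n -muln2 (mulnC _ 2) expnM.
  have [e ->] := pow4 i./2.
  apply/dvdnP; exists e; lia.
move=> a b anz.
set S := [set x | _].
case: (set_0Vmem S) => [-> | [x0 Hx0]]; first by rewrite cards0.
suff sub : S \subset [set x0; x0 + a].
  apply: leq_trans (subset_leq_card sub) _.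
  by rewrite cards2; case: (_ != _).
apply/subsetP => x; rewrite !inE => /eqP Hx.
rewrite inE in Hx0; move/eqP: Hx0 => Hx0.
have xz : x = x0 + (x - x0) by rewrite addrC subrK.
move: (x - x0) xz => z xz; rewrite {}xz in Hx *.
have H : fcor4 k i alpha (x0 + z + a) - fcor4 k i alpha (x0 + z)
       = fcor4 k i alpha (x0 + a) - fcor4 k i alpha x0 by rewrite Hx Hx0.
clear Hx Hx0 S; move: H anz; case: x0 => p1 p2; case: z => z1 z2; case: a => a1 b1 H anz.
have E1 := sum4 _ ch2 _ _ _ _ (congr1 fst H).
have E2 := sum4 _ ch2 _ _ _ _ (congr1 snd H).
simpl in E1, E2.
rewrite P4 // in E2.
have anz' : (a1 != 0) || (b1 != 0).
  have : (a1, b1) != (0, 0) := anz.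
  by rewrite xpair_eqE negb_and.
have q1 := Q4 _ ch2 k p1 z1 a1.
have q2 := Q4 _ ch2 k p2 z2 b1.
have E1' : z1 ^+ (2 ^ k) * a1 + z1 * a1 ^+ (2 ^ k)
    + alpha * (z2 ^+ (2 ^ k) * b1 + z2 * b1 ^+ (2 ^ k)) ^+ (2 ^ i) = 0.
  rewrite -[RHS]E1 !exprM -q1 -q2 !(frD _ ch2); ring.
have fix01 : forall t : F, t ^+ (2 ^ k) = t -> t = 0 \/ t = 1.
  by move=> t; apply: fixed01 cardF cop kpos.
have [[-> ->]|[-> ->]] := kernel _ ch2 _ _ _ _ _ _ _ d1 d2 ncube fix01 anz' E2 E1'.
  by rewrite (_ : ((0:F), (0:F)) = 0) // addr0 eqxx.
by rewrite eqxx orbT.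
Qed.
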